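(* Let $q$ be an odd prime power, and let $P(q^2)$ be the Paley graph on $\mathbb{F}_{q^2}$. Let $\varphi$ be the automorphism of $P(q^2)$ given by $\varphi(\gamma)=\gamma^q$. (1) If $q\equiv 1\pmod 4$, then $\varphi$ interchanges only non-adjacent vertices. (2) If $q\equiv 3\pmod 4$, then $\varphi$ interchanges only adjacent vertices.
   Context: The Paley graph $P(r)$, for a prime power $r\equiv 1\pmod 4$, has vertex set $\mathbb{F}_r$, with $x,y$ adjacent iff $x-y$ is a non-zero square in $\mathbb{F}_r$. $\varphi$ is an involution; it ''interchanges only non-adjacent (resp. adjacent) vertices'' if every $\gamma$ with $\varphi(\gamma)\ne\gamma$ is non-adjacent (resp. adjacent) to $\varphi(\gamma)$. *)

(* Defs.v *)
From mathcomp Require Import all_boot all_order all_algebra all_field.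
Set Implicit Arguments. Unset Strict Implicit. Unset Printing Implicit Defensive.
Import GRing.Theory.
Local Open Scope ring_scope.

Definition paley_adj (F : finFieldType) (x y : F) : bool :=
  (x - y != 0) && [exists z : F, z ^+ 2 == x - y].

Definition frobq (F : finFieldType) (q : nat) (g : F) : F := g ^+ q.

Definition interchanges_only_nonadj (F : finFieldType) (phi : F -> F) : Prop :=
  forall g : F, phi g != g -> ~~ paley_adj g (phi g).
Definition interchanges_only_adj (F : finFieldType) (phi : F -> F) : Prop :=
  forall g : F, phi g != g -> paley_adj g (phi g).

(* Main.v *)
Require Import Defs.
From mathcomp Require Import all_boot all_order all_algebra all_field.
From mathcomp Require Import cyclic zify.
Set Implicit Arguments. Unset Strict Implicit. Unset Printing Implicit Defensive.
Import GRing.Theory.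
Local Open Scope ring_scope.

Lemma unit_pow (F : finFieldType) (x : F) : x != 0 -> x ^+ (#|F|.-1) = 1.
Proof.
move=> x0; apply: (mulfI x0); rewrite -exprS prednK ?expf_card ?mulr1 //.
by rewrite (cardD1 x).
Qed.

Local Close Scope ring_scope.
Theorem lemma26 (F : finFieldType) (q : nat) :
  (exists p k : nat, [/\ prime p, (0 < k)%N & q = p ^ k]) ->
  odd q ->
  #|F| = (q ^ 2)%N ->
  ((q %% 4 = 1)%N -> interchanges_only_nonadj (frobq (F:=F) q)) /\
  ((q %% 4 = 3)%N -> interchanges_only_adj (frobq (F:=F) q)).
Proof.
Local Open Scope ring_scope.
move=> [p [k [pp k0 qE]]] oq cardF.
have pch : p \in [pchar F]%R.
  by apply: (card_finPcharP (n := (k * 2)%N)) => //; rewrite cardF qE -expnM.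
have frob (x y : F) : ((x - y) ^+ q = x ^+ q - y ^+ q)%R.
  rewrite exprDn_pchar; last by rewrite qE pnatX pnatE ?pch.
  by rewrite exprNn -signr_odd oq expr1 mulN1r.
have fixq (x : F) : ((x ^+ q) ^+ q = x)%R.
  by rewrite -exprM -[RHS](expf_card x) cardF expnS expn1.
have q0 : (0 < q)%N by rewrite qE expn_gt0 prime_gt0.
have key (g : F) : (g ^+ q != g)%R ->
    [/\ (g - g ^+ q != 0)%R, ((g - g ^+ q) ^+ q.-1 = -1)%R & paley_adj g (frobq q g) = [exists z : F, (z ^+ 2 == g - g ^+ q)%R]].
  move=> ng; set d := (g - g ^+ q)%R.
  have d0 : (d != 0)%R by rewrite subr_eq0 eq_sym.
  have dq : (d ^+ q = - d)%R by rewrite frob fixq opprB.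
  split => //.
    apply: (mulfI d0); rewrite -exprS prednK // dq; by rewrite mulrN1.
  by rewrite /paley_adj /frobq d0.
have two0 : (2%:R : F) != 0%R.
  apply/negP => /eqP h2.
  have pq : (q%:R : F) = 0%R.
    by rewrite qE natrX (pcharf0 pch) expr0n; case: (k) k0.
  move: pq; rewrite (divn_eq q 2) modn2 oq natrD natrM h2 mulr0 add0r.
  by move/eqP; rewrite oner_eq0.
split => q4 g ng.
- have [d0 dq1 ->] := key g ng.
  set d := (g - g ^+ q)%R.
  apply/negP => /existsP [z /eqP zd].
  have z0 : (z != 0)%R by apply/negP => /eqP z0; move: d0; rewrite /d in zd *; rewrite -zd z0 expr0n eqxx.
  have := unit_pow z0.
  set m := (q %/ 4)%N.
  have qm : q = (4 * m + 1)%N by rewrite {1}(divn_eq q 4) q4 mulnC.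
  have -> : (#|F|.-1 = 2 * (q.-1 * (2 * m + 1)))%N by rewrite cardF qm; lia.
  rewrite exprM zd exprM dq1 -signr_odd /= oddD oddM /= expr1.
  move=> h; have e2 : (2%:R : F) = 1 - (-1) by rewrite opprK.
  by move: two0; rewrite e2 h subrr eqxx.
- have [d0 dq1 ->] := key g ng.
  set d := (g - g ^+ q)%R.
  set m := (q %/ 4)%N.
  have qm : q = (4 * m + 3)%N by rewrite {1}(divn_eq q 4) q4 mulnC.
  set N := (q.-1 * (2 * m + 2))%N.
  have MN : (#|F|.-1 = 2 * N)%N by rewrite /N cardF qm; lia.
  have dN : (d ^+ N = 1)%R.
    by rewrite /N exprM dq1 -signr_odd oddD oddM /= ?addbb ?expr0.
  have M0 : (0 < #|F|.-1)%N by rewrite MN /N qm; lia.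
  have /hasP [w _ pw] : has (#|F|.-1).-primitive_root%R (enum (predC1 (0 : F))).
    apply: has_prim_root => //.
    - by apply/allP => x; rewrite mem_enum /= => x0; apply/unity_rootP/unit_pow.
    - exact: enum_uniq.
    - by rewrite -cardE cardC1.
  have [[i _] /= di] := prim_rootP pw (unit_pow d0).
  have : (#|F|.-1 %| i * N)%N by rewrite (prim_order_dvd pw) exprM -di dN.
  rewrite MN dvdn_pmul2r; last by rewrite /N qm; lia.
  move=> /dvdnP [j ij].
  apply/existsP; exists (w ^+ j)%R; by rewrite /d di ij -exprM.
Qed.
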